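(* Let $\rho^0\in\Lambda^*(x_0)$. Then $\rho^0$ is the outcome of a subgame perfect equilibrium in $(\mathcal{X},x_0)$.
   Context: Games: an arena $G=(\Pi,V,(V_i)_{i\in\Pi},E)$ has finite player set $\Pi$, finite vertex set $V$ ($|V|\ge2$, $|\Pi|\le|V|$), partition $(V_i)$ and edges $E$ with every vertex having a successor. A quantitative reachability game has targets $F_i\subseteq V$ and $\mathrm{Cost}_i(\rho)=$ least $k$ with $\rho_k\in F_i$ (or $+\infty$). Strategies map histories ending in $V_i$ to successors; a profile $\sigma$ has outcome $\langle\sigma\rangle_{v_0}$. $\sigma$ is a Nash equilibrium if no player can strictly decrease his cost of the outcome by unilaterally changing his strategy; it is a subgame perfect equilibrium if for every history $hv$ from the initial vertex, $\sigma_{|h}$ ($\sigma_{i|h}(h')=\sigma_i(hh')$) is a Nash equilibrium in the game from $v$ with costs $\rho\mapsto\mathrm{Cost}_i(h\rho)$. Extended game of $(\mathcal{G},v_0)$: $\mathcal{X}$ is the reachability game on arena $X$ with $V^X=V\times2^\Pi$, $((v,I),(v',I'))\in E^X$ iff $(v,v')\in E$ and $I'=I\cup\{i:v'\in F_i\}$, $(v,I)\in V^X_i$ iff $v\in V_i$, targets $F^X_i=\{(v,I):i\in I\}$; $x_0=(v_0,\{i:v_0\in F_i\})$. $I(u)$ is the second component of $u$. $\mathcal{I}$ is the set of $I$ with some $(v,I)$ reachable from $x_0$, $N=|\mathcal{I}|$, and $J_1<\dots<J_N$ a fixed total order of $\mathcal{I}$ extending $I<I'$ iff $I\ne I'$ and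 some $(v',I')$ is reachable from some $(v,I)$. $V^{\ge J_n}=\{(v,J_m):v\in V,m\ge n\}$. Labelings: for $\lambda:V^X\to\mathbb{N}\cup\{+\infty\}$, a play $\rho$ of $X$ is $\lambda$-consistent if $\mathrm{Cost}_i(\rho_{\ge n})\le\lambda(\rho_n)$ for all $n$ and $i$ with $\rho_n\in V^X_i$. $\lambda^0(u)=0$ if $u\in V^X_i$ and $i\in I(u)$, else $+\infty$. The update of $\lambda^k$ w.r.t. $V^{\ge J_n}$ keeps values outside $V^{\ge J_n}$ and for $u\in V^{\ge J_n}\cap V^X_i$ sets $\lambda^{k+1}(u)=0$ if $i\in I(u)$, otherwise $1+\min_{(u,u')\in E^X}\sup\{\mathrm{Cost}_i(\rho):\rho\in\Lambda^k(u')\}$, $\Lambda^k(u')$ being the $\lambda^k$-consistent plays from $u'$ and $1+(+\infty)=+\infty$. The sequence is generated by $n_0=N$, $\lambda^{k+1}=$ update of $\lambda^k$ w.r.t. $V^{\ge J_{n_k}}$, $n_{k+1}=n_k-1$ if $\lambda^{k+1}=\lambda^k$ and $n_k>1$, else $n_{k+1}=n_k$. It eventually becomes constant, equal to $\lambda^*$; $\Lambda^*(v)$ is the set of $\lambda^*$-consistent plays from $v$. *)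

(* Defs.v *)
From mathcomp Require Import all_boot.
From Stdlib Require Import ClassicalEpsilon.
Set Implicit Arguments. Unset Strict Implicit. Unset Printing Implicit Defensive.

(* Costs in N u {+oo}: Some n = n, None = +oo. *)
Definition cost := option nat.
Definition cle (a b : cost) : bool :=
  match a, b with
  | _, None => true
  | None, Some _ => false
  | Some m, Some n => m <= n
  end.
Definition clt (a b : cost) : bool :=
  match a, b with
  | Some m, Some n => m < n
  | Some _, None => true
  | None, _ => false
  end.
Definition cmin (a b : cost) : cost := if cle a b then a else b.
Definition csucc (a : cost) : cost := omap S a.

Definition pbool (P : Prop) : bool :=
  if excluded_middle_informative P then true else false.

Definition first_hit (P : nat -> bool) : cost :=
  match excluded_middle_informative (exists n, P n) with
  | left H => Some (ex_minn H)
  | right _ => None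
  end.

Lemma csup_ex (S : cost -> Prop) :
  (exists m, forall c, S c -> cle c (Some m)) ->
  exists m, pbool (forall c, S c -> cle c (Some m)).
Proof.
case=> m Hm; exists m; rewrite /pbool.
by case: excluded_middle_informative.
Qed.

(* supremum in N u {+oo} (least upper bound; sup of the empty set is 0) *)
Definition csup (S : cost -> Prop) : cost :=
  match excluded_middle_informative (exists m, forall c, S c -> cle c (Some m)) with
  | left H => Some (ex_minn (csup_ex H))
  | right _ => None
  end.

Section Game.
Variables (Pl V : finType) (owner : V -> Pl) (E : rel V) (F : Pl -> {set V}).

Definition VX : finType := (V * {set Pl})%type.
Definition EX : rel VX :=
  fun u u' => E u.1 u'.1 && (u'.2 == u.2 :|: [set i | u'.1 \in F i]).
Definition ownerX (u : VX) : Pl := owner u.1.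
Definition initX (v0 : V) : VX := (v0, [set i | v0 \in F i]).

Definition is_playX (rho : nat -> VX) : Prop := forall n, EX (rho n) (rho n.+1).
(* Cost_i in the extended game: target F^X_i = {(v,I) | i \in I} *)
Definition CostX (i : Pl) (rho : nat -> VX) : cost :=
  first_hit (fun n => i \in (rho n).2).

Definition consistent (lam : VX -> cost) (rho : nat -> VX) : Prop :=
  forall n, cle (CostX (ownerX (rho n)) (fun k => rho (n + k))) (lam (rho n)).
Definition LamPlays (lam : VX -> cost) (u : VX) (rho : nat -> VX) : Prop :=
  [/\ rho 0 = u, is_playX rho & consistent lam rho].

(* the set \mathcal I and its admissible total orders, given as a duplicate-free
   enumeration s = [:: J_1; ...; J_N] *)
Definition reachI (x0 : VX) : {set {set Pl}} :=
  [set I | [exists v, connect EX x0 (v, I)]].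
Definition reach_lt (I I' : {set Pl}) : bool :=
  (I != I') && [exists v, exists v', connect EX (v, I) (v', I')].
Definition valid_order (x0 : VX) (s : seq {set Pl}) : Prop :=
  [/\ uniq s, s =i reachI x0 &
      forall I I', I \in s -> I' \in s -> reach_lt I I' -> index I s < index I' s].

(* labelings; indices n are 0-based: V^{>= J_(n+1)} = {u | u.2 \in drop n s} *)
Definition lam0 : {ffun VX -> cost} :=
  [ffun u => if ownerX u \in u.2 then Some 0 else None].

Definition update (s : seq {set Pl}) (n : nat) (lam : {ffun VX -> cost})
  : {ffun VX -> cost} :=
  [ffun u => if u.2 \in drop n s then
               (if ownerX u \in u.2 then Some 0 else
                 csucc (\big[cmin/None]_(u' | EX u u')
                          csup (fun c => exists rho,
                                  LamPlays lam u' rho /\ c = CostX (ownerX u) rho)))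
             else lam u].

Definition lam_step (s : seq {set Pl}) (st : {ffun VX -> cost} * nat) :=
  let: (lam, n) := st in
  let lam' := update s n lam in
  (lam', if (lam' == lam) && (0 < n) then n.-1 else n).

(* lambda^k, starting from n_0 = N (i.e. 0-based index N-1) *)
Definition lam_seq (s : seq {set Pl}) (k : nat) : {ffun VX -> cost} :=
  (iter k (lam_step s) (lam0, (size s).-1)).1.

(* strategy profiles: sigma p u = successor chosen (by the owner of u)
   at history p ++ [:: u] *)
Definition profile := seq VX -> VX -> VX.
Definition valid_profile (sigma : profile) : Prop := forall p u, EX u (sigma p u).

Definition outc (sigma : profile) (h : seq VX) (v : VX) (k : nat) : VX :=
  (iter k (fun st : seq VX * VX => (rcons st.1 st.2, sigma st.1 st.2)) (h, v)).2.

Definition catp (h : seq VX) (rho : nat -> VX) (k : nat) : VX :=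
  if k < size h then nth (rho 0) h k else rho (k - size h).

Definition deviation (i : Pl) (sigma sigma' : profile) : Prop :=
  valid_profile sigma' /\ forall p u, ownerX u != i -> sigma' p u = sigma p u.

(* sigma_{|h} is a Nash equilibrium from v with costs rho |-> Cost_i(h rho) *)
Definition NE_after (sigma : profile) (h : seq VX) (v : VX) : Prop :=
  forall i sigma', deviation i sigma sigma' ->
    ~~ clt (CostX i (catp h (outc sigma' h v))) (CostX i (catp h (outc sigma h v))).

Definition hist_from (x0 : VX) (t : seq VX) : bool :=
  if t is a :: t' then (a == x0) && path EX a t' else false.

Definition SPE (sigma : profile) (x0 : VX) : Prop :=
  valid_profile sigma /\
  forall h v, hist_from x0 (rcons h v) -> NE_after sigma h v.

End Game.

(* Main.v *)
Require Import Defs.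
From mathcomp Require Import all_boot.
From Stdlib Require Import ClassicalEpsilon Classical.
From mathcomp Require Import zify.
Set Implicit Arguments. Unset Strict Implicit. Unset Printing Implicit Defensive.

Lemma cle_refl c : cle c c.
Proof. by case: c => //= n. Qed.
Lemma cle_None c : cle c None.
Proof. by case: c. Qed.
Lemma cle0 c : cle (Some 0) c.
Proof. by case: c. Qed.
Lemma cle_trans a b c : cle a b -> cle b c -> cle a c.
Proof. case: a; case: b; case: c => //= x y z; exact: leq_trans. Qed.
Lemma cle_total a b : cle a b || cle b a.
Proof. case: a; case: b => //= x y; exact: leq_total. Qed.
Lemma cle_nclt a b : cle b a -> ~~ clt a b.
Proof. case: a; case: b => //= x y; by rewrite -leqNgt. Qed.
Lemma csucc_mono a b : cle a b -> cle (csucc a) (csucc b).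
Proof. by case: a; case: b. Qed.
Lemma cle_Some_inv c m : cle c (Some m) -> exists2 n, c = Some n & n <= m.
Proof. by case: c => // n h; exists n. Qed.

Lemma cminl a b : cle (cmin a b) a.
Proof. rewrite /cmin; case: ifP => h; first exact: cle_refl.
by move: (cle_total a b); rewrite h. Qed.
Lemma cminr a b : cle (cmin a b) b.
Proof. rewrite /cmin; case: ifP => h //; exact: cle_refl. Qed.
Lemma cmin_case a b : cmin a b = a \/ cmin a b = b.
Proof. rewrite /cmin; case: ifP; tauto. Qed.
Lemma cmin_mono a b a' b' : cle a a' -> cle b b' -> cle (cmin a b) (cmin a' b').
Proof.
move=> h1 h2; case: (cmin_case a' b') => ->.
  exact: cle_trans (cminl _ _) h1.
exact: cle_trans (cminr _ _) h2.
Qed.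

Section BM.
Variable T : finType.
Lemma bm_le_seq (P : pred T) (f : T -> cost) (r : seq T) x :
  x \in r -> P x -> cle (\big[cmin/None]_(i <- r | P i) f i) (f x).
Proof.
elim: r => // a r IH; rewrite inE big_cons => /orP [/eqP <- -> | xr Px].
  exact: cminl.
case: ifP => _; last exact: IH.
exact: cle_trans (cminr _ _) (IH xr Px).
Qed.
Lemma bm_le (P : pred T) (f : T -> cost) x :
  P x -> cle (\big[cmin/None]_(i | P i) f i) (f x).
Proof. by move=> Px; apply: bm_le_seq => //; rewrite mem_index_enum. Qed.
Lemma bm_attain (P : pred T) (f : T -> cost) m :
  \big[cmin/None]_(i | P i) f i = Some m -> exists2 x, P x & f x = Some m.
Proof.
apply: (big_ind (fun c => c = Some m -> exists2 x, P x & f x = Some m)) => //.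
  by move=> a b ha hb; case: (cmin_case a b) => ->; [exact: ha | exact: hb].
by move=> i Pi e; exists i.
Qed.
Lemma bm_mono (P : pred T) (f g : T -> cost) :
  (forall x, P x -> cle (f x) (g x)) ->
  cle (\big[cmin/None]_(i | P i) f i) (\big[cmin/None]_(i | P i) g i).
Proof.
move=> h; apply: (big_rec2 (fun a b => cle a b)) => //.
by move=> i a b Pi hab; apply: cmin_mono => //; exact: h.
Qed.
End BM.

Lemma pboolP (P : Prop) : pbool P = true <-> P.
Proof. rewrite /pbool; case: excluded_middle_informative => //; split => //. Qed.

Lemma csup_ub (S : cost -> Prop) c : S c -> cle c (csup S).
Proof.
rewrite /csup; case: excluded_middle_informative => [H|_] Sc; last exact: cle_None.
case: ex_minnP => m /pboolP hm _; exact: hm.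
Qed.
Lemma csup_le (S : cost -> Prop) m :
  (forall c, S c -> cle c (Some m)) -> cle (csup S) (Some m).
Proof.
move=> hb; rewrite /csup; case: excluded_middle_informative => [H|H]; last first.
  by exfalso; apply: H; exists m.
case: ex_minnP => n _ hmin /=; apply: hmin; exact/pboolP.
Qed.
Lemma csup_mono (S S' : cost -> Prop) :
  (forall c, S c -> S' c) -> cle (csup S) (csup S').
Proof.
move=> hs; case e: (csup S') => [m|]; last exact: cle_None.
apply: csup_le => c Sc; rewrite -e; apply: csup_ub; exact: hs.
Qed.
Lemma csup_None (S : cost -> Prop) :
  csup S = None -> forall m, exists c, S c /\ ~~ cle c (Some m).
Proof.
rewrite /csup; case: excluded_middle_informative => // H _ m.
apply: NNPP => hn; apply: H; exists m => c Sc.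
apply: NNPP => hc; apply: hn; exists c; split => //; exact/negP.
Qed.
Lemma csup_attained (S : cost -> Prop) m :
  csup S = Some m -> (exists c, S c) -> S (Some m).
Proof.
rewrite /csup; case: excluded_middle_informative => // H [<-] [c0 Sc0].
case: ex_minnP => n /pboolP hn hmin.
apply: NNPP => hnS.
clear H.
case: n hn hmin hnS => [|n] hn hmin hnS.
  case: (cle_Some_inv (hn _ Sc0)) => k ek; rewrite leqn0 => /eqP ek0.
  by apply: hnS; move: Sc0; rewrite ek ek0.
have : n.+1 <= n.
  apply: hmin; apply/pboolP => c Sc.
  case: (cle_Some_inv (hn _ Sc)) => k ek hk; subst c => /=.
  rewrite leq_eqVlt in hk; case/orP: hk => [/eqP ek|]; last by [].
  by subst k; exfalso; exact: hnS.
by rewrite ltnn.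
Qed.

Lemma fh_ext (P P' : nat -> bool) : P =1 P' -> first_hit P = first_hit P'.
Proof.
move=> h; rewrite /first_hit.
case: excluded_middle_informative => [H|H]; case: excluded_middle_informative => [H'|H'] //.
- by congr Some; apply: eq_ex_minn.
- by exfalso; apply: H'; case: H => n Pn; exists n; rewrite -h.
- by exfalso; apply: H; case: H' => n Pn; exists n; rewrite h.
Qed.
Lemma fh_SomeP (P : nat -> bool) t :
  first_hit P = Some t -> P t /\ forall m, m < t -> ~~ P m.
Proof.
rewrite /first_hit; case: excluded_middle_informative => // H [<-].
case: ex_minnP => n Pn hmin; split => // m hm; apply/negP => Pm.
by move: (hmin _ Pm); rewrite leqNgt hm.
Qed.
Lemma fh_NoneP (P : nat -> bool) : first_hit P = None -> forall m, ~~ P m.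
Proof.
rewrite /first_hit; case: excluded_middle_informative => // H _ m.
by apply/negP => Pm; apply: H; exists m.
Qed.
Lemma fh_Some_intro (P : nat -> bool) t :
  P t -> (forall m, m < t -> ~~ P m) -> first_hit P = Some t.
Proof.
move=> Pt hm; rewrite /first_hit; case: excluded_middle_informative => [H|H]; last first.
  by exfalso; apply: H; exists t.
congr Some; case: ex_minnP => n Pn hmin; apply/eqP; rewrite eqn_leq hmin //.
by rewrite leqNgt; apply/negP => hn; move: (hm _ hn); rewrite Pn.
Qed.
Lemma fh_le (P : nat -> bool) t : P t -> cle (first_hit P) (Some t).
Proof.
move=> Pt; case e: (first_hit P) => [n|]; last by move: (fh_NoneP e t); rewrite Pt.
case: (fh_SomeP e) => Pn hm /=; rewrite leqNgt; apply/negP => h.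
by move: (hm _ h); rewrite Pt.
Qed.
Lemma fh_shift (P : nat -> bool) n :
  (forall m, m < n -> ~~ P m) ->
  first_hit P = omap (addn n) (first_hit (fun m => P (n + m))).
Proof.
move=> hn; case e: (first_hit (fun m => P (n + m))) => [t|] /=.
  case: (fh_SomeP e) => Pt ht; apply: fh_Some_intro => // m hm.
  case: (ltnP m n) => hmn; first exact: hn.
  rewrite -(subnKC hmn); apply: ht; by rewrite ltn_subLR.
have hN := fh_NoneP e.
case e2: (first_hit P) => [t|] //; case: (fh_SomeP e2) => Pt _.
case: (ltnP t n) => htn; first by move: (hn _ htn); rewrite Pt.
by move: (hN (t - n)); rewrite subnKC // Pt.
Qed.
Lemma fh_prefix (P P' : nat -> bool) n :
  (forall m, m <= n -> P m = P' m) -> P n -> first_hit P = first_hit P'.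
Proof.
move=> h Pn; case e: (first_hit P) => [t|]; last by move: (fh_NoneP e n); rewrite Pn.
case: (fh_SomeP e) => Pt ht.
have tn : t <= n by rewrite leqNgt; apply/negP => hh; move: (ht _ hh); rewrite Pn.
symmetry; apply: fh_Some_intro; first by rewrite -h.
move=> m hm; rewrite -h; first exact: ht.
exact: leq_trans (ltnW hm) tn.
Qed.
Lemma fh_0 (P : nat -> bool) : P 0 -> first_hit P = Some 0.
Proof. by move=> h; apply: fh_Some_intro. Qed.
Lemma fh_None_intro (P : nat -> bool) : (forall m, ~~ P m) -> first_hit P = None.
Proof.
move=> h; rewrite /first_hit; case: excluded_middle_informative => // [[m Pm]].
by move: (h m); rewrite Pm.
Qed.

Section Plays.
Variables (Pl V : finType) (owner : V -> Pl) (E : rel V) (F : Pl -> {set V}).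
Local Notation VXt := (VX Pl V).
Local Notation play := (nat -> VXt).
Local Notation EXr := (EX E F).
Local Notation own := (ownerX owner).
Local Notation Lam := (LamPlays owner E F).

Definition sh (r : play) n : play := fun k => r (n + k).
Definition pcons (x : VXt) (r : play) : play := fun k => if k is k'.+1 then r k' else x.
Definition trivialv (lam : VXt -> cost) (x : VXt) : bool :=
  (own x \in x.2) || (lam x == None).
Definition Fupd (lam : VXt -> cost) (x : VXt) : cost :=
  csucc (\big[cmin/None]_(u' | EXr x u')
           csup (fun c => exists rho, Lam lam u' rho /\ c = CostX (own x) rho)).

Lemma CostX_ext i (r r' : play) : r =1 r' -> CostX i r = CostX i r'.
Proof. move=> h; apply: fh_ext => n; by rewrite h. Qed.

Lemma play_sh (r : play) n : is_playX E F r -> is_playX E F (sh r n).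
Proof. move=> h k; rewrite /sh addnS; exact: h. Qed.

Lemma cons_sh (lam : VXt -> cost) (r : play) n : consistent owner lam r -> consistent owner lam (sh r n).
Proof.
move=> h k; rewrite /sh.
rewrite (@CostX_ext _ (fun k0 => r (n + (k + k0))) (fun k0 => r ((n + k) + k0))).
  exact: h.
by move=> k0; rewrite addnA.
Qed.

Lemma Lam_sh (lam : VXt -> cost) (u : VXt) (r : play) n : Lam lam u r -> Lam lam (r n) (sh r n).
Proof.
case=> h0 hp hc; split; first by rewrite /sh addn0.
  exact: play_sh.
exact: cons_sh.
Qed.

Lemma Lam_mono (lam mu : VXt -> cost) u r :
  (forall x, cle (lam x) (mu x)) -> Lam lam u r -> Lam mu u r.
Proof. move=> h [h0 hp hc]; split => // n; exact: cle_trans (hc n) (h _). Qed.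

Lemma Lam_cost (lam : VXt -> cost) (u : VXt) (r : play) : Lam lam u r -> cle (CostX (own u) r) (lam u).
Proof.
case=> h0 _ hc; move: (hc 0); rewrite h0.
by rewrite (@CostX_ext _ (fun k => r (0 + k)) r).
Qed.

Lemma I_step (r : play) n : is_playX E F r -> (r n).2 \subset (r n.+1).2.
Proof. move=> h; move: (h n) => /andP [_ /eqP ->]; exact: subsetUl. Qed.

Lemma I_mono (r : play) m n : is_playX E F r -> m <= n -> (r m).2 \subset (r n).2.
Proof.
move=> h; elim: n => [|n IH]; first by rewrite leqn0 => /eqP ->.
rewrite leq_eqVlt => /orP [/eqP -> //| hm].
exact: subset_trans (IH hm) (I_step n h).
Qed.

Lemma Cost_hit j (r : play) M : is_playX E F r -> cle (CostX j r) (Some M) -> j \in (r M).2.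
Proof.
move=> hp; case e: (CostX j r) => [t|] //= htM.
case: (fh_SomeP e) => jt _; exact: (subsetP (I_mono hp htM)).
Qed.

Lemma CostX_in i (r : play) : i \in (r 0).2 -> CostX i r = Some 0.
Proof. by move=> h; apply: fh_0. Qed.

Lemma CostX_cons i (x : VXt) (r : play) : i \notin x.2 -> CostX i (pcons x r) = csucc (CostX i r).
Proof.
move=> h; rewrite /CostX (@fh_shift _ 1); last by case.
by case: (first_hit _).
Qed.

Lemma triv_ok (lam : VXt -> cost) (r : play) n : trivialv lam (r n) ->
  cle (CostX (own (r n)) (fun k => r (n + k))) (lam (r n)).
Proof.
case/orP => [h | /eqP ->]; last exact: cle_None.
by rewrite CostX_in ?addn0 // cle0.
Qed.

Lemma Lam_cons (lam : VXt -> cost) (x : VXt) (r : play) :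
  EXr x (r 0) -> Lam lam (r 0) r -> cle (CostX (own x) (pcons x r)) (lam x) ->
  Lam lam x (pcons x r).
Proof.
move=> hx [_ hp hc] h0; split => //.
  by case=> [|n] //=; exact: hp.
case=> [|n].
  by rewrite (@CostX_ext _ (fun k => pcons x r (0 + k)) (pcons x r)).
rewrite (@CostX_ext _ (fun k => pcons x r (n.+1 + k)) (fun k => r (n + k))); first exact: (hc n).
by move=> k; rewrite addSn.
Qed.

Lemma count_I (r : play) (nt : nat -> bool) M L :
  is_playX E F r ->
  (forall q, nt q -> exists j, j \notin (r q).2 /\ j \in (r (q + M)).2) ->
  exists p, p <= #|Pl| * (L + M) /\ forall q, p <= q < p + L -> ~~ nt q.
Proof.
move=> hp hnt; apply: NNPP => hno.
have H : forall p, p <= #|Pl| * (L + M) -> exists q, p <= q < p + L /\ nt q.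
  move=> p hpb; apply: NNPP => hq; apply: hno; exists p; split => // q hq2.
  by apply/negP => ntq; apply: hq; exists q.
have key : forall k, k <= #|Pl| -> k.+1 <= #|(r (k.+1 * (L + M))).2|.
  elim=> [|k IH] hk.
    case: (H 0 (leq0n _)) => q [/andP [_ hq] nq].
    case: (hnt q nq) => j [_ hj].
    rewrite card_gt0; apply/set0Pn; exists j.
    apply: (subsetP (I_mono hp _)) hj; rewrite mul1n; exact: leq_add (ltnW hq) (leqnn _).
  have hk' : k.+1 <= #|Pl| := hk.
  case: (H (k.+1 * (L + M))) => [|q [/andP [h1 h2] nq]].
    by rewrite leq_mul2r hk' orbT.
  case: (hnt q nq) => j [hj1 hj2].
  have hprop : (r (k.+1 * (L + M))).2 \proper (r (k.+2 * (L + M))).2.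
    apply/properP; split.
      apply: I_mono => //; by rewrite leq_mul2r leqnSn orbT.
    exists j.
      apply: (subsetP (I_mono hp _)) hj2.
      rewrite [k.+2 * _]mulSn; move: h2; set P := k.+1 * (L + M); lia.
    apply/negP => hj; move/negP: hj1; apply.
    exact: (subsetP (I_mono hp h1)).
  exact: leq_ltn_trans (IH (ltnW hk)) (proper_card hprop).
move: (key _ (leqnn _)) => /leq_trans/(_ (max_card _)); by rewrite ltnn.
Qed.

Lemma pigeon (T : finType) (f : nat -> T) p :
  exists a b, [/\ p <= a, a < b, b <= p + #|T| & f a = f b].
Proof.
apply: NNPP => hno.
pose g (i : 'I_(#|T|.+1)) := f (p + i).
have ginj : injective g.
  move=> i j hij; apply: val_inj; apply: NNPP => hne.
  case: (ltngtP i j) => hl; last by [].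
  - apply: hno; exists (p + i), (p + j); split => //.
      by rewrite leq_addr.
      by rewrite ltn_add2l.
    by rewrite leq_add2l -ltnS.
  - apply: hno; exists (p + j), (p + i); split => //.
      by rewrite leq_addr.
      by rewrite ltn_add2l.
    by rewrite leq_add2l -ltnS.
move: (leq_card g ginj); by rewrite card_ord ltnn.
Qed.

End Plays.

Section NonEmpty.
Variables (Pl V : finType) (owner : V -> Pl) (E : rel V) (F : Pl -> {set V}).
Local Notation VXt := (VX Pl V).
Local Notation play := (nat -> VXt).
Local Notation EXr := (EX E F).
Local Notation own := (ownerX owner).
Local Notation Lam := (LamPlays owner E F).
Local Notation triv := (trivialv owner).

Lemma Lam_ext (lam : VXt -> cost) u (r r' : play) : r =1 r' -> Lam lam u r -> Lam lam u r'.
Proof.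
move=> h [h0 hp hc]; split; first by rewrite -h.
  by move=> n; rewrite -!h; exact: hp.
move=> n; rewrite -h (@CostX_ext _ _ _ (fun k => r' (n + k)) (fun k => r (n + k))).
  exact: hc.
by move=> k; rewrite h.
Qed.

Lemma sh_pcons (r : play) m : sh r m =1 pcons (r m) (sh r m.+1).
Proof. by case=> [|k] /=; rewrite /sh ?addn0 ?addnS ?addSn. Qed.

Lemma triv_cons (lam : VXt -> cost) (y : VXt) (r : play) :
  triv lam y -> cle (CostX (own y) (pcons y r)) (lam y).
Proof.
case/orP => [h | /eqP ->]; last exact: cle_None.
by rewrite CostX_in // cle0.
Qed.

Variables (lam lam' : VXt -> cost).
Hypothesis hne : forall x, exists r, Lam lam x r.
Hypothesis hmono : forall x, cle (lam' x) (lam x).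
Hypothesis hform : forall x, triv lam' x \/ lam' x = Fupd owner E F lam x.

Definition Sset (x a : VXt) := fun c => exists rho, Lam lam a rho /\ c = CostX (own x) rho.
Definition Amove (x a : VXt) := EXr x a /\ lam' x = csucc (csup (Sset x a)).

Lemma A_exists x : ~~ triv lam' x -> exists a, Amove x a.
Proof.
move=> hnt; case: (hform x) => [ht | e]; first by rewrite ht in hnt.
move: hnt; rewrite /trivialv negb_or => /andP [_ hN].
move: e hN; rewrite /Fupd.
case e: (\big[cmin/None]_(u' | EXr x u') _) => [m|] e2; rewrite e2 //= => _.
case: (bm_attain e) => a ha hs; exists a; split => //.
by rewrite e2 /Sset hs.
Qed.

Lemma A_cost x a rho : Amove x a -> Lam lam a rho -> own x \notin x.2 ->
  cle (CostX (own x) (pcons x rho)) (lam' x).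
Proof.
move=> [_ ->] hr hx; rewrite CostX_cons //; apply: csucc_mono.
apply: csup_ub; by exists rho.
Qed.

Lemma ntriv_mono y : ~~ triv lam y -> ~~ triv lam' y.
Proof.
rewrite /trivialv !negb_or => /andP [-> /=].
move: (hmono y); case: (lam y) => //; by case: (lam' y).
Qed.

Definition Ngood N x (r : play) :=
  Lam lam x r /\ forall q, q < N -> ~~ triv lam' (r q) -> Amove (r q) (r q.+1).

Lemma Ngood_ex N x : exists r, Ngood N x r.
Proof.
elim: N => [|N [r [hr hg]]].
  case: (hne x) => r hr; exists r; split => //.
case: (classic (triv lam' (r N) \/ Amove (r N) (r N.+1))) => [hok | hno].
  exists r; split => // q; rewrite ltnS leq_eqVlt => /orP [/eqP -> | hq] hnt.
    by case: hok => // h; rewrite h in hnt.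
  exact: hg.
have hntN : ~~ triv lam' (r N) by apply/negP => h; apply: hno; left.
case: (A_exists hntN) => a ha.
case: (hne a) => r2 hr2.
pose r' : play := fun m => if m <= N then r m else r2 (m - N.+1).
have r'N1 : r' N.+1 = a by rewrite /r' ltnn subnn; case: hr2.
have hgood : forall q, q < N.+1 -> ~~ triv lam' (r' q) -> Amove (r' q) (r' q.+1).
  move=> q; rewrite ltnS leq_eqVlt => /orP [/eqP -> | hq].
    by rewrite r'N1 /r' leqnn.
  rewrite /r' (ltnW hq) hq; exact: hg.
case: (hr) => hr0 hrp hrc; case: (hr2) => hr20 hr2p hr2c.
have hpl : is_playX E F r'.
  move=> m; rewrite /r'; case: (ltngtP m N) => hm.
  - by exact: hrp.
  - by have -> : m.+1 - N.+1 = (m - N.+1).+1 by lia.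
  - by subst m; rewrite subnn hr20; case: ha.
have C1 : forall m, N < m -> Lam lam (r' m) (sh r' m).
  move=> m hm.
  have e : sh r' m =1 sh r2 (m - N.+1).
    move=> k; rewrite /sh /r'.
    have -> : (m + k <= N) = false by apply/negbTE; rewrite -ltnNge; lia.
    congr r2; lia.
  apply: (Lam_ext (r := sh r2 (m - N.+1))); first by move=> k; rewrite e.
  have -> : r' m = r2 (m - N.+1) by rewrite /r' leqNgt hm.
  exact: Lam_sh hr2.
have C2 : forall d, d <= N.+1 -> Lam lam (r' (N.+1 - d)) (sh r' (N.+1 - d)).
  elim=> [_|d IH hd]; first by apply: C1; rewrite subn0.
  have em : N.+1 - d = (N.+1 - d.+1).+1 by lia.
  move: (IH (ltnW hd)); rewrite em; set m := N.+1 - d.+1 => hL.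
  apply: (Lam_ext (r := pcons (r' m) (sh r' m.+1))); first by move=> k; rewrite sh_pcons.
  have e0 : sh r' m.+1 0 = r' m.+1 by rewrite /sh addn0.
  apply: Lam_cons; first by rewrite e0; exact: hpl.
    by rewrite e0.
  case: (boolP (triv lam (r' m))) => ht; first exact: triv_cons.
  have ht' := ntriv_mono ht.
  have hA : Amove (r' m) (r' m.+1) by apply: hgood => //; rewrite /m; lia.
  apply: cle_trans (hmono _).
  apply: A_cost hA hL _.
  by move: ht'; rewrite /trivialv negb_or => /andP [].
exists r'; split => //.
apply: (Lam_ext (r := sh r' 0)); first by move=> k; rewrite /sh add0n.
move: (C2 _ (leqnn _)); rewrite subnn.
have -> : r' 0 = x by rewrite /r' leq0n.
done.
Qed.

Lemma nonempty_step x : exists r, Lam lam' x r.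
Proof.
apply: NNPP => hW0.
pose W y := ~ exists r, Lam lam' y r.
have W1 : forall y a, W y -> ~~ triv lam' y -> Amove y a -> W a.
  move=> y a hy hnt hA [rho hrho]; apply: hy.
  have hrl : Lam lam a rho := Lam_mono hmono hrho.
  exists (pcons y rho); case: (hrho) => h0 _ _.
  apply: Lam_cons; first by rewrite h0; case: hA.
    by rewrite h0.
  apply: A_cost hA hrl _.
  by move: hnt; rewrite /trivialv negb_or => /andP [].
have W2 : forall y a, W y -> triv lam' y -> EXr y a -> W a.
  move=> y a hy ht hE [rho hrho]; apply: hy.
  exists (pcons y rho); case: (hrho) => h0 _ _.
  apply: Lam_cons; first by rewrite h0.
    by rewrite h0.
  exact: triv_cons.
set K := #|VXt|.
set M := \max_(y : VXt) odflt 0 (lam' y).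
set N := #|Pl| * (K.+1 + M) + K.+1.
case: (Ngood_ex N x) => r [hr hg].
case: (hr) => hr0 hrp hrc.
have hW : forall q, q <= N -> W (r q).
  elim=> [_|q IH hq]; first by rewrite hr0.
  have hWq := IH (ltnW hq).
  case: (boolP (triv lam' (r q))) => ht.
    exact: W2 hWq ht (hrp q).
  exact: W1 hWq ht (hg q hq ht).
pose nt q := (q < N) && ~~ triv lam' (r q).
have hnt : forall q, nt q -> exists j, j \notin (r q).2 /\ j \in (r (q + M)).2.
  move=> q /andP [hq ht]; exists (own (r q)); split.
    by move: ht; rewrite /trivialv negb_or => /andP [].
  have hA := hg q hq ht.
  have hL : Lam lam (r q.+1) (sh r q.+1) := Lam_sh _ hr.
  have hc := A_cost hA hL.
  have hc2 : cle (CostX (own (r q)) (sh r q)) (lam' (r q)).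
    rewrite (CostX_ext _ (sh_pcons r q)); apply: hc.
    by move: ht; rewrite /trivialv negb_or => /andP [].
  have : cle (CostX (own (r q)) (sh r q)) (Some M).
    apply: cle_trans hc2 _.
    move: ht; rewrite /trivialv negb_or => /andP [_].
    case e: (lam' (r q)) => [c|] // _ /=.
    by move: (@leq_bigmax _ (fun y => odflt 0 (lam' y)) (r q)); rewrite e.
  move/(Cost_hit (play_sh q hrp)); by rewrite /sh.
case: (@count_I _ _ E F r nt M K.+1 hrp hnt) => p [hp hwin].
case: (pigeon r p) => a [b [hpa hab hbK eab]].
have htr : forall t, p <= t <= p + K -> triv lam' (r t).
  move=> t /andP [h1 h2].
  have := hwin t; rewrite h1 addnS ltnS h2 /= => /(_ isT).
  rewrite /nt negb_and negbK.
  have -> : (t < N) = true by apply/idP; rewrite /N; lia.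
  done.
set d := b - a.
have hd : 0 < d by rewrite subn_gt0.
pose per : play := fun m => r (a + m %% d).
apply: (hW a); first by rewrite /N; lia.
exists per; split.
- by rewrite /per mod0n addn0.
- move=> m; rewrite /per.
  have hmd : m %% d < d := ltn_pmod m hd.
  have -> : m.+1 %% d = (m %% d).+1 %% d by rewrite -addn1 -modnDml addn1.
  case: (ltngtP (m %% d).+1 d) => hlt.
  + rewrite (modn_small hlt) addnS; exact: hrp.
  + by move: hlt; rewrite ltnNge hmd.
  + rewrite hlt modnn addn0 eab.
    have -> : b = (a + m %% d).+1 by rewrite -addnS hlt /d subnKC // ltnW.
    exact: hrp.
- move=> m; apply: triv_ok; rewrite /per; apply: htr.
  have := ltn_pmod m hd; rewrite /d; lia.
Qed.
End NonEmpty.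

Section Iter.
Variables (Pl V : finType) (owner : V -> Pl) (E : rel V) (F : Pl -> {set V}).
Local Notation VXt := (VX Pl V).
Local Notation play := (nat -> VXt).
Local Notation EXr := (EX E F).
Local Notation own := (ownerX owner).
Local Notation Lam := (LamPlays owner E F).
Local Notation triv := (trivialv owner).
Local Notation Fup := (Fupd owner E F).
Variable s : seq {set Pl}.

Definition st k := iter k (lam_step owner E F s) (lam0 owner, (size s).-1).
Definition nk k := (st k).2.
Local Notation lamk := (lam_seq owner E F s).

Lemma lam_succ k : lamk k.+1 = update owner E F s (nk k) (lamk k).
Proof. by rewrite /lam_seq iterS /nk /st; case: (iter _ _ _). Qed.

Lemma n_succ k : nk k.+1 =
  if (update owner E F s (nk k) (lamk k) == lamk k) && (0 < nk k) then (nk k).-1 else nk k.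
Proof. by rewrite /lam_seq /nk /st iterS; case: (iter _ _ _). Qed.

Lemma n_le k : nk k.+1 <= nk k.
Proof. rewrite n_succ; case: ifP => // _; exact: leq_pred. Qed.

Lemma drop_mono (n n' : nat) (I : {set Pl}) : n' <= n -> I \in drop n s -> I \in drop n' s.
Proof.
move=> h; rewrite -(subnK h) -drop_drop => hI.
exact: mem_drop hI.
Qed.

Lemma upd_eq n (lam : {ffun VXt -> cost}) u :
  update owner E F s n lam u =
  if u.2 \in drop n s then (if own u \in u.2 then Some 0 else Fup lam u) else lam u.
Proof. by rewrite /update ffunE. Qed.

Lemma lam0_eq u : lam0 owner u = if own u \in u.2 then Some 0 else None.
Proof. by rewrite /lam0 ffunE. Qed.

Lemma triv_lam0 u : triv (lam0 owner) u.
Proof. rewrite /trivialv lam0_eq; by case: ifP. Qed.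

Lemma Qinv k u : lamk k u <> lam0 owner u -> u.2 \in drop (nk k) s.
Proof.
elim: k => [|k IH]; first by [].
rewrite lam_succ upd_eq; case: ifP => hu hne.
  exact: drop_mono (n_le k) hu.
exact: drop_mono (n_le k) (IH hne).
Qed.

Lemma Fupd_mono (lam mu : VXt -> cost) x :
  (forall y, cle (lam y) (mu y)) -> cle (Fup lam x) (Fup mu x).
Proof.
move=> h; rewrite /Fupd; apply: csucc_mono; apply: bm_mono => a _.
apply: csup_mono => c [rho [hr ->]]; exists rho; split => //.
exact: Lam_mono h hr.
Qed.

Lemma lamk_own k u : own u \in u.2 -> lamk k u = Some 0.
Proof.
move=> h; elim: k => [|k IH]; first by rewrite /lam_seq /= lam0_eq h.
by rewrite lam_succ upd_eq h IH; case: ifP.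
Qed.

Lemma mono k u : cle (lamk k.+1 u) (lamk k u).
Proof.
elim: k u => [|k IH] u.
  rewrite lam_succ upd_eq; case: ifP => _; last exact: cle_refl.
  have -> : lamk 0 = lam0 owner by [].
  rewrite lam0_eq; case: ifP => _; [exact: cle_refl | exact: cle_None].
rewrite [lamk k.+2]lam_succ upd_eq; case: ifP => hu; last exact: cle_refl.
case: ifP => ho; first by rewrite lamk_own // cle_refl.
have -> : lamk k.+1 u = update owner E F s (nk k) (lamk k) u by rewrite lam_succ.
rewrite upd_eq.
case: ifP => hu2.
  rewrite ho; exact: Fupd_mono IH.
have e : lamk k u = lam0 owner u.
  by apply: NNPP => hh; move: (Qinv hh); rewrite hu2.
rewrite e lam0_eq ho; exact: cle_None.
Qed.

Lemma form k u : triv (lamk k.+1) u \/ lamk k.+1 u = Fup (lamk k) u.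
Proof.
rewrite lam_succ upd_eq; case: ifP => hu.
  case: ifP => ho; last by right.
  by left; rewrite /trivialv upd_eq hu ho.
left.
have e : lamk k u = lam0 owner u.
  by apply: NNPP => hh; move: (Qinv hh); rewrite hu.
rewrite /trivialv upd_eq hu e; exact: triv_lam0.
Qed.

Hypothesis hE : forall v, exists v', E v v'.

Definition succX (u : VXt) : VXt :=
  let v' := xchoose (hE u.1) in (v', u.2 :|: [set i | v' \in F i]).

Lemma succX_EX u : EXr u (succX u).
Proof. by rewrite /EX /succX /= xchooseP eqxx. Qed.

Lemma nonempty k x : exists r, Lam (lamk k) x r.
Proof.
elim: k x => [|k IH] x.
  exists (fun n => iter n succX x); split => //.
    move=> n; rewrite iterS; exact: succX_EX.
  move=> n; apply: triv_ok; exact: triv_lam0.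
apply: nonempty_step => //.
- move=> y; exact: mono.
- move=> y; exact: form.
Qed.

End Iter.

Section Fix.
Variables (Pl V : finType) (owner : V -> Pl) (E : rel V) (F : Pl -> {set V}).
Variable s : seq {set Pl}.
Variable lam_star : {ffun VX Pl V -> cost}.
Hypothesis hstar : exists K, forall k, K <= k -> lam_seq owner E F s k = lam_star.

Lemma fix_star u : u.2 \in s -> ownerX owner u \notin u.2 ->
  lam_star u = Fupd owner E F lam_star u.
Proof.
case: hstar => K hK hu ho.
have hn : forall m, nk owner E F s (K + m) = nk owner E F s K - m.
  elim=> [|m IH]; first by rewrite addn0 subn0.
  rewrite addnS n_succ -lam_succ hK ?hK ?leq_addr //; last by rewrite -addnS leq_addr.
  rewrite eqxx /= IH; case: ifP => h; first by rewrite subnS.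
  by move: h; rewrite subn_gt0 => /negbT; rewrite -leqNgt => h; rewrite subnS; move: h; rewrite -subn_eq0 => /eqP ->.
set k0 := K + nk owner E F s K.
have hk0 : nk owner E F s k0 = 0 by rewrite /k0 hn subnn.
have : lam_seq owner E F s k0.+1 = lam_star by rewrite hK // /k0 -addnS leq_addr.
rewrite lam_succ hk0 hK ?leq_addr // => e.
by rewrite -{1}e upd_eq drop0 hu (negbTE ho).
Qed.
End Fix.

Section MaxPlay.
Variables (Pl V : finType) (owner : V -> Pl) (E : rel V) (F : Pl -> {set V}).
Local Notation VXt := (VX Pl V).
Local Notation play := (nat -> VXt).
Local Notation EXr := (EX E F).
Local Notation own := (ownerX owner).
Local Notation Lam := (LamPlays owner E F).
Local Notation triv := (trivialv owner).
Variable lam : VXt -> cost.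

Lemma pump u i (rho : play) :
  Lam lam u rho ->
  (forall m, m <= #|Pl| * ((#|VXt|.+1 + \max_(y : VXt) odflt 0 (lam y)) +
                 \max_(y : VXt) odflt 0 (lam y)) + (#|VXt|.+1 + \max_(y : VXt) odflt 0 (lam y)) ->
     i \notin (rho m).2) ->
  exists r, Lam lam u r /\ CostX i r = None.
Proof.
set M := \max_(y : VXt) odflt 0 (lam y).
set K := #|VXt|.
set L := K.+1 + M.
move=> hr hi.
case: (hr) => hr0 hrp hrc.
have hbound : forall q, ~~ triv lam (rho q) ->
    own (rho q) \notin (rho q).2 /\ own (rho q) \in (rho (q + M)).2.
  move=> q ht; split; first by move: ht; rewrite /trivialv negb_or => /andP [].
  have : cle (CostX (own (rho q)) (sh rho q)) (Some M).
    apply: cle_trans (hrc q) _.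
    move: ht; rewrite /trivialv negb_or => /andP [_].
    case e: (lam (rho q)) => [c|] // _ /=.
    by move: (@leq_bigmax _ (fun y => odflt 0 (lam y)) (rho q)); rewrite e.
  move/(Cost_hit (play_sh q hrp)); by rewrite /sh.
pose nt q := ~~ triv lam (rho q).
have hnt : forall q, nt q -> exists j, j \notin (rho q).2 /\ j \in (rho (q + M)).2.
  by move=> q hq; exists (own (rho q)); exact: hbound.
case: (@count_I _ _ E F rho nt M L hrp hnt) => p [hp hwin].
case: (pigeon rho (p + M)) => a [b [hpa hab hbK eab]].
have htr : forall t, p <= t <= b -> triv lam (rho t).
  move=> t /andP [h1 h2].
  have := hwin t; rewrite h1 /= => /(_ _).
  rewrite /nt negbK; apply; rewrite /L; lia.
set d := b - a.
have hd : 0 < d by rewrite subn_gt0.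
pose r : play := fun m => if m < a then rho m else rho (a + (m - a) %% d).
have hper : forall m, a <= m -> exists2 t, t < d & r m = rho (a + t).
  move=> m hm; exists ((m - a) %% d); first exact: ltn_pmod.
  by rewrite /r ltnNge hm.
have hbb : b <= #|Pl| * (L + M) + L by rewrite /L; lia.
exists r; split; first split.
- rewrite /r; case: ifP => ha; first exact: hr0.
  have ea : a = 0 by lia.
  by rewrite ea sub0n mod0n hr0.
- move=> m; rewrite /r; case: (ltnP m.+1 a) => h1.
    have h2 : m < a by lia.
    rewrite h2; exact: hrp.
  case: (ltnP m a) => h2.
    have ea : a = m.+1 by lia.
    rewrite ea subnn mod0n addn0; exact: hrp.
  have -> : m.+1 - a = (m - a).+1 by lia.
  have hmd : (m - a) %% d < d := ltn_pmod _ hd.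
  have -> : (m - a).+1 %% d = ((m - a) %% d).+1 %% d by rewrite -addn1 -modnDml addn1.
  case: (ltngtP ((m - a) %% d).+1 d) => hlt.
  + rewrite (modn_small hlt) addnS; exact: hrp.
  + by move: hlt; rewrite ltnNge hmd.
  + rewrite hlt modnn addn0 eab.
    have -> : b = (a + (m - a) %% d).+1 by rewrite -addnS hlt /d subnKC // ltnW.
    exact: hrp.
- move=> m; case: (ltnP m a) => hm.
    case: (boolP (triv lam (rho m))) => ht.
      apply: triv_ok; by rewrite /r hm.
    have hmp : m < p.
      rewrite ltnNge; apply/negP => hpm; move: ht; rewrite htr //; lia.
    have [_ hj] := hbound m ht.
    have -> : r m = rho m by rewrite /r hm.
    have -> : CostX (own (rho m)) (fun k => r (m + k)) = CostX (own (rho m)) (fun k => rho (m + k)).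
      apply: (@fh_prefix _ _ M).
        move=> k hk; rewrite /r.
        have -> : (m + k < a) = true by apply/idP; lia.
        done.
      rewrite /r; have -> : (m + M < a) = true by apply/idP; lia.
      exact: hj.
    exact: hrc.
  case: (hper m hm) => t ht e.
  apply: triv_ok; rewrite e; apply: htr; rewrite /d in ht; lia.
- apply: fh_None_intro => m.
  case: (ltnP m a) => hm.
    rewrite /r hm; apply: hi; lia.
  case: (hper m hm) => t ht ->; apply: hi; rewrite /d in ht; lia.
Qed.

Lemma maxplay (hne : forall x, exists r, Lam lam x r) u i :
  exists r, Lam lam u r /\ forall r', Lam lam u r' -> cle (CostX i r') (CostX i r).
Proof.
set S := fun c => exists rho, Lam lam u rho /\ c = CostX i rho.
case e: (csup S) => [m|].
  have hS : S (Some m).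
    apply: csup_attained e _; case: (hne u) => r hr; by exists (CostX i r), r.
  case: hS => r [hr hc]; exists r; split => // r' hr'.
  rewrite -hc -e; apply: csup_ub; by exists r'.
set M := \max_(y : VXt) odflt 0 (lam y).
set K := #|VXt|.
set H := #|Pl| * ((K.+1 + M) + M) + (K.+1 + M).
case: (csup_None e H) => c [[rho [hr ->]] hc].
suff [r [hr2 hr2c]] : exists r, Lam lam u r /\ CostX i r = None.
  by exists r; split => // r' _; rewrite hr2c cle_None.
case ec: (CostX i rho) => [T|]; last by exists rho.
rewrite ec /= -ltnNge in hc.
apply: (pump hr) => m hm.
case: (fh_SomeP ec) => _ hT; apply: hT; rewrite -/M -/K; lia.
Qed.
End MaxPlay.

Section SPEc.
Variables (Pl V : finType) (owner : V -> Pl) (E : rel V) (F : Pl -> {set V}).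
Local Notation VXt := (VX Pl V).
Local Notation play := (nat -> VXt).
Local Notation EXr := (EX E F).
Local Notation own := (ownerX owner).
Local Notation Lam := (LamPlays owner E F).
Local Notation Fup := (Fupd owner E F).
Variable x0 : VXt.
Variable s : seq {set Pl}.
Hypothesis hs : s =i reachI E F x0.
Variable lam : VXt -> cost.
Hypothesis hne : forall x, exists r, Lam lam x r.
Hypothesis hfix : forall u, u.2 \in s -> own u \notin u.2 -> lam u = Fup lam u.
Variable rho0 : play.
Hypothesis hrho0 : Lam lam x0 rho0.

Definition pun (u : VXt) (i : Pl) : play :=
  proj1_sig (constructive_indefinite_description _ (maxplay hne u i)).

Lemma pun_spec u i : Lam lam u (pun u i) /\
  forall r', Lam lam u r' -> cle (CostX i r') (CostX i (pun u i)).
Proof. rewrite /pun; by case: constructive_indefinite_description. Qed.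

Definition init (u : VXt) : play := if u == x0 then rho0 else pun u (own u).
Definition updP (P : play) (b : VXt) : play :=
  if P 1 == b then sh P 1 else pun b (own (P 0)).
Definition plan (p : seq VXt) (u : VXt) : play :=
  foldl updP (init (head u p)) (behead (rcons p u)).
Definition sigma : profile Pl V := fun p u => plan p u 1.

Lemma plan_rcons p u v : plan (rcons p u) v = updP (plan p u) v.
Proof.
rewrite /plan.
have -> : head v (rcons p u) = head u p by case: p.
have -> : behead (rcons (rcons p u) v) = rcons (behead (rcons p u)) v by case: p.
by rewrite foldl_rcons.
Qed.

Lemma plan_Lam p u : Lam lam u (plan p u).
Proof.
elim/last_ind: p u => [|p a IH] u.
  rewrite /plan /= /init; case: eqP => [-> | _]; first exact: hrho0.
  exact: (pun_spec u _).1.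
rewrite plan_rcons /updP; case: eqP => [e | _]; last exact: (pun_spec _ _).1.
rewrite -e; exact: Lam_sh (IH a).
Qed.

Lemma plan0 p u : plan p u 0 = u.
Proof. by case: (plan_Lam p u). Qed.

Lemma sigma_valid : valid_profile E F sigma.
Proof.
move=> p u; rewrite /sigma; case: (plan_Lam p u) => h0 hp _.
by move: (hp 0); rewrite h0.
Qed.

Lemma outc_plan h v k : outc sigma h v k = plan h v k.
Proof.
rewrite /outc.
set f := fun st : seq VXt * VXt => (rcons st.1 st.2, sigma st.1 st.2).
suff H : forall k, (iter k f (h, v)).2 = plan h v k /\
    plan (iter k f (h, v)).1 (iter k f (h, v)).2 =1 sh (plan h v) k by case: (H k).
elim=> [|n [e1 e2]] /=; first by split; [rewrite plan0 | move=> m; rewrite /sh add0n].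
have e3 : sigma (iter n f (h, v)).1 (iter n f (h, v)).2 = plan h v n.+1.
  by rewrite /sigma e2 /sh addn1.
split; first exact: e3.
move=> m; rewrite e3 plan_rcons /updP.
have -> : plan (iter n f (h, v)).1 (iter n f (h, v)).2 1 == plan h v n.+1.
  by rewrite e2 /sh addn1.
by rewrite /sh e2 /sh addnA addn1.
Qed.

Lemma omap_add n a b : cle a (csucc b) -> cle (omap (addn n) a) (omap (addn n.+1) b).
Proof. case: a; case: b => //= x y h; by rewrite addSn -addnS leq_add2l. Qed.

Lemma NE h v : hist_from E F x0 (rcons h v) -> NE_after owner E F sigma h v.
Proof.
move=> hh i sigma' [hval hdev].
apply: cle_nclt.
set f' := fun st : seq VXt * VXt => (rcons st.1 st.2, sigma' st.1 st.2).
pose Q k := outc sigma' h v k.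
pose hk k := (iter k f' (h, v)).1.
have hQS : forall k, Q k.+1 = sigma' (hk k) (Q k) by move=> k; rewrite /Q /outc iterS.
have hkS : forall k, hk k.+1 = rcons (hk k) (Q k) by move=> k; rewrite /hk /Q /outc iterS.
have hQ0 : Q 0 = v by [].
have hQp : forall k, EXr (Q k) (Q k.+1) by move=> k; rewrite hQS; exact: hval.
pose G := catp h Q.
have hGh : forall m, m <= size h -> G m = nth x0 (rcons h v) m.
  move=> m hm; rewrite /G /catp nth_rcons.
  case: ltnP => hm2; first by apply: set_nth_default.
  have -> : m = size h by apply/eqP; rewrite eqn_leq hm hm2.
  by rewrite subnn eqxx.
have hGQ : forall k, G (size h + k) = Q k.
  by move=> k; rewrite /G /catp ltnNge leq_addr /= addKn.
move: hh; rewrite headI /= => /andP [/eqP hx0 /pathP hpath].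
have hG0 : G 0 = x0 by rewrite hGh // headI.
have hGp : is_playX E F G.
  move=> m; case: (ltnP m (size h)) => hm.
    rewrite hGh ?(ltnW hm) // hGh //.
    move: (hpath x0 m); rewrite -headI nth_behead size_behead size_rcons; apply.
    exact: hm.
  have -> : m = size h + (m - size h) by rewrite subnKC.
  by rewrite -addnS !hGQ.
have hreach : forall m, connect EXr x0 (G m).
  elim=> [|m IH]; first by rewrite hG0 connect0.
  exact: connect_trans IH (connect1 (hGp m)).
have hQs : forall k, (Q k).2 \in s.
  move=> k; rewrite hs inE; apply/existsP; exists (Q k).1.
  by rewrite -surjective_pairing -hGQ.
pose Pk k := plan (hk k) (Q k).
have hPkS : forall k, Pk k.+1 = updP (Pk k) (Q k.+1) by move=> k; rewrite /Pk hkS plan_rcons.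
have hdv : forall k, Pk k 1 != Q k.+1 -> own (Q k) = i.
  move=> k hne2; apply/eqP; apply: contraR hne2 => hno.
  by rewrite hQS hdev.
pose A k m := if m < size h + k then G m else Pk k (m - (size h + k)).
have hA0 : CostX i (catp h (outc sigma h v)) = CostX i (A 0).
  apply: CostX_ext => m; rewrite /A /catp addn0; case: ifP => hm.
    rewrite /G /catp hm; apply: set_nth_default => //.
  by rewrite /Pk /hk /= outc_plan.
have hAkg : forall k m, m <= size h + k -> A k m = G m.
  move=> k m hm; rewrite /A; case: ltnP => // hm2.
  have -> : m = size h + k by apply/eqP; rewrite eqn_leq hm hm2.
  by rewrite subnn /Pk plan0 -hGQ.
have hchain : forall k, cle (CostX i (A k)) (CostX i (A k.+1)).
  move=> k.
  set n0 := size h + k.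
  have hPk0 : Pk k 0 = Q k by rewrite /Pk plan0.
  have hAk : forall m, m <= n0 -> A k m = G m.
    move=> m hm; rewrite /A; case: ltnP => // hm2.
    have -> : m = n0 by apply/eqP; rewrite eqn_leq hm hm2.
    by rewrite subnn hPk0 -hGQ.
  have hAk1 : forall m, m <= n0 -> A k.+1 m = G m.
    by move=> m hm; rewrite /A addnS ltnS hm.
  case: (boolP (Pk k 1 == Q k.+1)) => hq.
    apply: cle_trans (cle_refl _); rewrite (CostX_ext _ (r' := A k.+1)); first exact: cle_refl.
    move=> m; case: (leqP m n0) => hm; first by rewrite hAk ?hAk1.
    rewrite /A /n0 ltnNge (ltnW hm) /= addnS ltnNge hm /= hPkS /updP hq /sh.
    congr Pk; rewrite /n0 in hm; by rewrite subnS add1n prednK // subn_gt0.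
  have hown := hdv k hq.
  case: (boolP (i \in (Q k).2)) => hi.
    rewrite /CostX (@fh_prefix _ (fun m => i \in (A k.+1 m).2) n0).
      exact: cle_refl.
      by move=> m hm; rewrite hAk ?hAk1.
    by rewrite hAk // /n0 hGQ.
  have hnotG : forall m, m <= n0 -> i \notin (G m).2.
    move=> m hm; apply/negP => him; move/negP: hi; apply.
    rewrite -hGQ; exact: (subsetP (I_mono hGp hm)).
  rewrite /CostX (@fh_shift _ n0); last first.
    by move=> m hm; rewrite hAk; [exact: hnotG (ltnW hm) | exact: ltnW].
  rewrite (@fh_shift (fun n => i \in (A k.+1 n).2) n0.+1); last first.
    by move=> m hm; rewrite hAk1 // hnotG.
  apply: omap_add.
  have e1 : first_hit (fun m => i \in (A k (n0 + m)).2) = CostX i (Pk k).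
    apply: fh_ext => m; rewrite /A ltnNge leq_addr /= addKn; done.
  have e2 : first_hit (fun m => i \in (A k.+1 (n0.+1 + m)).2) = CostX i (pun (Q k.+1) i).
    apply: fh_ext => m; rewrite /A /n0 addnS ltnNge leq_addr /= addKn hPkS /updP (negbTE hq) hPk0 hown; done.
  rewrite e1 e2.
  have hc1 : cle (CostX i (Pk k)) (lam (Q k)).
    rewrite -hown -hPk0; apply: Lam_cost; rewrite hPk0; exact: plan_Lam.
  apply: cle_trans hc1 _.
  rewrite hfix ?hQs ?hown //.
  rewrite /Fupd hown; apply: csucc_mono.
  apply: cle_trans (bm_le _ (hQp k)) _.
  case e: (CostX i (pun (Q k.+1) i)) => [m|]; last exact: cle_None.
  apply: csup_le => c [rho [hr ->]]; rewrite -e; exact: (pun_spec _ _).2.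
have hch : forall k, cle (CostX i (A 0)) (CostX i (A k)).
  elim=> [|k IH]; first exact: cle_refl.
  exact: cle_trans IH (hchain k).
rewrite hA0.
case e: (CostX i (catp h (outc sigma' h v))) => [T|]; last exact: cle_None.
have hGT := e; rewrite -/Q -/G in hGT.
apply: cle_trans (hch T) _.
rewrite -hGT /CostX (@fh_prefix _ (fun m => i \in (G m).2) T); first exact: cle_refl.
  by move=> m hm; rewrite hAkg // (leq_trans hm (leq_addl _ _)).
rewrite hAkg ?leq_addl //; by case: (fh_SomeP hGT).
Qed.

End SPEc.

Theorem proposition2p14 (Pl V : finType) (owner : V -> Pl) (E : rel V)
  (F : Pl -> {set V}) (v0 : V)
  (hE : forall v, exists v', E v v') (hV : 2 <= #|V|) (hPl : #|Pl| <= #|V|)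
  (s : seq {set Pl}) (hs : valid_order E F (initX F v0) s)
  (lam_star : {ffun VX Pl V -> cost})
  (hstar : exists K, forall k, K <= k -> lam_seq owner E F s k = lam_star)
  (rho0 : nat -> VX Pl V)
  (hrho0 : LamPlays owner E F lam_star (initX F v0) rho0) :
  exists sigma : profile Pl V,
    SPE owner E F sigma (initX F v0) /\
    forall k, outc sigma [::] (initX F v0) k = rho0 k.
Proof.
have hne : forall x, exists r, LamPlays owner E F lam_star x r.
  case: hstar => K hK x; rewrite -(hK K (leqnn K)); exact: (nonempty owner F s hE K x).
have hfix := fix_star hstar.
case: hs => _ hs2 _.
exists (sigma (initX F v0) hne rho0); split.
  split; first exact: sigma_valid.
  move=> h v hh; exact: (@NE _ _ owner E F (initX F v0) s hs2 lam_star hne hfix rho0 hrho0 h v hh).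
move=> k; rewrite outc_plan /plan /=; last exact: hrho0.
by rewrite /init eqxx.
Qed.
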